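(* Let $k\ge 1$ and let $G$ be a graph of order $n$ with minimum degree $\delta\ge k+1$. Then $\Gamma_{\times k,t}(G)\le n-\delta+k$. Moreover the bound is sharp: for all integers $\delta\ge k+1\ge 2$ and $b\ge\lceil \delta/(k+1)\rceil$, the join $G_b=H_b\vee T$, where $H_b$ is the disjoint union of $b$ copies of $K_{k+1}$ and $T$ is an edgeless graph on $\delta-k$ vertices, has minimum degree $\delta$, order $n=b(k+1)+\delta-k$, and $\Gamma_{\times k,t}(G_b)=n-\delta+k$.
   Context: A set $S\subseteq V(G)$ is a $k$-tuple total dominating set ($k$TDS) of a graph $G$ with $\delta(G)\ge k$ if $|N_G(x)\cap S|\ge k$ for every $x\in V(G)$. The upper $k$-tuple total domination number $\Gamma_{\times k,t}(G)$ is the maximum cardinality of a minimal (with respect to inclusion) $k$TDS of $G$. The join $A\vee B$ of disjoint graphs is their union together with all edges between $V(A)$ and $V(B)$. *)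

(* Defs.v *)
(* Simple graphs = symmetric irreflexive relations on a finType. *)
From mathcomp Require Import all_boot.
Set Implicit Arguments. Unset Strict Implicit. Unset Printing Implicit Defensive.

Section Graphs.
Variable T : finType.
Implicit Types (e : rel T) (S : {set T}).

Definition nbhd e (x : T) : {set T} := [set y | e x y].
Definition deg e (x : T) : nat := #|nbhd e x|.
(* minimum degree delta(G); the default #|T| is irrelevant for nonempty T,
   since every degree is < #|T| *)
Definition mindeg e : nat := \big[minn/#|T|]_(x : T) deg e x.

Definition is_kTDS (k : nat) e S : bool :=
  [forall x : T, k <= #|nbhd e x :&: S|].
Definition is_minimal_kTDS (k : nat) e S : bool :=
  is_kTDS k e S && [forall S' : {set T}, (S' \proper S) ==> ~~ is_kTDS k e S'].
Definition upper_ktdom (k : nat) e : nat :=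
  \max_(S : {set T} | is_minimal_kTDS k e S) #|S|.
End Graphs.

Definition join_rel (A B : finType) (eA : rel A) (eB : rel B) : rel (A + B) :=
  fun u v => match u, v with
             | inl a, inl a' => eA a a'
             | inr b, inr b' => eB b b'
             | _, _ => true
             end.
Definition copies_rel (I : finType) {A : finType} (e : rel A) : rel (I * A) :=
  fun u v => (u.1 == v.1) && e u.2 v.2.
Definition complete_rel (m : nat) : rel 'I_m := fun a c => a != c.
Definition edgeless_rel (m : nat) : rel 'I_m := fun _ _ => false.

Definition Gb_vert (k d b : nat) : finType := (('I_b * 'I_k.+1) + 'I_(d - k))%type.
Definition Gb_rel (k d b : nat) : rel (Gb_vert k d b) :=
  join_rel (@copies_rel 'I_b _ (@complete_rel k.+1)) (@edgeless_rel (d - k)).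

Definition ceil_div (m d : nat) : nat := (m + d.-1) %/ d.
Arguments Gb_rel k d b : clear implicits.
Arguments Gb_vert k d b : clear implicits.

(* Main.v *)
Require Import Defs.
From mathcomp Require Import all_boot zify.

Lemma bigmin_le (T : eqType) (s : seq T) (F : T -> nat) n x :
  x \in s -> \big[minn/n]_(y <- s) F y <= F x.
Proof.
elim: s => [//|y s IH]; rewrite inE big_cons => /orP [/eqP <-|/IH H].
  by rewrite geq_minl.
by rewrite geq_min H orbT.
Qed.

Lemma mindeg_le (T : finType) (e : rel T) x : mindeg e <= deg e x.
Proof. by apply: bigmin_le; rewrite mem_index_enum. Qed.

Lemma part1 (T : finType) (e : rel T) k :
  upper_ktdom k e <= #|T| - mindeg e + k.
Proof.
apply/bigmax_leqP => S /andP [_ /forallP Hmin].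
have [->|[v vS]] := set_0Vmem S; first by rewrite cards0.
have := Hmin (S :\ v); rewrite properD1 //= => /forallPn [x].
rewrite -ltnNge => Hx.
have H1 : #|nbhd e x :&: S| <= #|nbhd e x :&: (S :\ v)| + 1.
  have : nbhd e x :&: S \subset v |: (nbhd e x :&: (S :\ v)).
    apply/subsetP => y; rewrite !inE => /andP [-> ->].
    by case: (y == v).
  move/subset_leq_card; rewrite cardsU1; lia.
have H2 := cardsID S (nbhd e x).
have H3 : #|nbhd e x :\: S| <= #|~: S|.
  by apply: subset_leq_card; apply/subsetP => y; rewrite !inE => /andP [].
have H4 : #|S| + #|~: S| = #|T| by exact: cardsC.
have H5 := @mindeg_le T e x.
rewrite /deg in H5.
rewrite -H4; lia.
Qed.

Lemma card_sum_set (X Y : finType) (A : {set X + Y}) :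
  #|A| = #|[set x | inl x \in A]| + #|[set y | inr y \in A]|.
Proof.
rewrite -!sum1_card !big_mkcond big_sumType /=.
by congr (_ + _); rewrite [RHS]big_mkcond; apply: eq_bigr => i _; rewrite inE.
Qed.

Lemma card_row (I A : finType) (i : I) (P : pred A) :
  #|[set x : I * A | (x.1 == i) && P x.2]| = #|[set c | P c]|.
Proof.
have inj : injective (pair i : A -> I * A) by move=> c c' [].
rewrite -(card_imset _ inj); apply: eq_card => -[j c]; rewrite !inE /=.
apply/andP/imsetP.
  by case=> /eqP -> Pc; exists c; rewrite ?inE.
by case=> c'; rewrite inE => Pc [-> ->].
Qed.

Section Gb.
Variables k d b : nat.
Local Notation V := (Gb_vert k d b).
Local Notation E := (Gb_rel k d b).

Lemma nb_ll i a : [set x | inl x \in nbhd E (inl (i,a))] = [set x | (x.1 == i) && (x.2 != a)].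
Proof.
apply/setP => -[j c]; rewrite /nbhd !inE /Gb_rel /join_rel /copies_rel /complete_rel /=.
by rewrite eq_sym (eq_sym a).
Qed.

Lemma nb_lr i a : [set y | inr y \in nbhd E (inl (i,a))] = setT.
Proof. by apply/setP => y; rewrite /nbhd !inE. Qed.

Lemma nb_rl t : [set x | inl x \in nbhd E (inr t)] = setT.
Proof. by apply/setP => y; rewrite /nbhd !inE. Qed.

Lemma nb_rr t : [set y | inr y \in nbhd E (inr t)] = set0.
Proof. by apply/setP => y; rewrite /nbhd !inE. Qed.

Definition Hs : {set V} := [set u : V | if u is inl _ then true else false].

Lemma Hs_l (A : {set V}) : [set x | inl x \in A :&: Hs] = [set x | inl x \in A].
Proof. by apply/setP => x; rewrite !inE andbT. Qed.

Lemma Hs_r (A : {set V}) : [set y | inr y \in A :&: Hs] = set0.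
Proof. by apply/setP => x; rewrite !inE andbF. Qed.

Lemma card_C1 (a : 'I_k.+1) : #|[set c | c != a]| = k.
Proof.
rewrite (_ : [set c | c != a] = [set~ a]) ?cardsC1 ?card_ord //.
by apply/setP => c; rewrite !inE.
Qed.

Lemma row_C1 (i : 'I_b) (a : 'I_k.+1) : #|[set x : 'I_b * 'I_k.+1 | (x.1 == i) && (x.2 != a)]| = k.
Proof. by have := @card_row _ _ i (fun c : 'I_k.+1 => c != a); rewrite card_C1. Qed.

Lemma deg_l i a : deg E (inl (i,a)) = k + (d - k).
Proof.
rewrite /deg card_sum_set nb_ll nb_lr row_C1 cardsT card_ord //.
Qed.

Lemma deg_r t : deg E (inr t) = b * k.+1.
Proof.
by rewrite /deg card_sum_set nb_rl nb_rr cardsT cards0 card_prod !card_ord addn0.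
Qed.

Lemma Nl_H i a : #|nbhd E (inl (i,a)) :&: Hs| = k.
Proof. by rewrite card_sum_set Hs_l Hs_r nb_ll row_C1 cards0 addn0. Qed.

Lemma Nr_H t : #|nbhd E (inr t) :&: Hs| = b * k.+1.
Proof. by rewrite card_sum_set Hs_l Hs_r nb_rl cardsT cards0 card_prod !card_ord addn0. Qed.

Lemma card_Hs : #|Hs| = b * k.+1.
Proof.
rewrite card_sum_set (_ : [set x | inl x \in Hs] = setT); last by apply/setP => x; rewrite !inE.
rewrite (_ : [set x | inr x \in Hs] = set0); last by apply/setP => x; rewrite !inE.
by rewrite cardsT cards0 card_prod !card_ord addn0.
Qed.

Lemma card_V : #|V| = b * k.+1 + (d - k).
Proof. by rewrite card_sum card_prod !card_ord. Qed.

End Gb.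

Theorem mainTheorem6 (k : nat) (hk : 1 <= k) :
  (forall (T : finType) (e : rel T),
      symmetric e -> irreflexive e -> k.+1 <= mindeg e ->
      upper_ktdom k e <= #|T| - mindeg e + k)
  /\
  (forall d b : nat, k.+1 <= d -> ceil_div d k.+1 <= b ->
      mindeg (Gb_rel k d b) = d
      /\ #|Gb_vert k d b| = b * k.+1 + (d - k)
      /\ upper_ktdom k (Gb_rel k d b) = #|Gb_vert k d b| - d + k).
Proof.
split; first by move=> T e _ _ _; exact: part1.
move=> d b hd hb.
have bk : d <= b * k.+1.
  have H1 := ltn_ceil (d + k) (ltn0Sn k).
  have H2 := leq_mul hb (leqnn k.+1).
  rewrite /ceil_div /= in H2.
  move: H1 H2; set q := (d + k) %/ k.+1 => H1 H2; nia.
have b0 : 0 < b by nia.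
have md : mindeg (Gb_rel k d b) = d.
  apply/eqP; rewrite eqn_leq; apply/andP; split.
    have := @mindeg_le _ (Gb_rel k d b) (inl (Ordinal b0, ord0)); rewrite deg_l; lia.
  rewrite /mindeg; apply: (big_ind (fun m => d <= m)).
  - rewrite card_V; lia.
  - by move=> x y hx hy; rewrite leq_min hx hy.
  - case=> [[i a]|t] _; rewrite ?deg_l ?deg_r; lia.
split => //; split; first exact: card_V.
apply/eqP; rewrite eqn_leq; apply/andP; split.
  have := @part1 _ (Gb_rel k d b) k; rewrite md.
  have := card_V k d b; move=> ->; lia.
have hmin : is_minimal_kTDS k (Gb_rel k d b) (Hs k d b).
  apply/andP; split.
    apply/forallP => -[[i a]|t]; rewrite ?Nl_H ?Nr_H //; nia.
  apply/forallP => S'; apply/implyP => /properP [sub [u uH uS']].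
  case: u uH uS' => [[i a]|t] uH uS'; last by rewrite inE in uH.
  have : 0 < #|[set c | c != a]| by rewrite card_C1.
  case/card_gt0P => a'; rewrite inE => ha'.
  apply/forallPn; exists (inl (i,a')); rewrite -ltnNge.
  have sub2 : nbhd (Gb_rel k d b) (inl (i,a')) :&: S' \subset
              (nbhd (Gb_rel k d b) (inl (i,a')) :&: Hs k d b) :\ inl (i,a).
    apply/subsetP => y; rewrite in_setI => /andP [hy yS].
    rewrite in_setD1 in_setI hy (subsetP sub _ yS) andbT andbT.
    by apply: (contraNneq _ uS') => <-.
  have h1 := subset_leq_card sub2.
  have h2 := cardsD1 (inl (i,a)) (nbhd (Gb_rel k d b) (inl (i,a')) :&: Hs k d b).
  rewrite Nl_H in h2.
  have h3 : inl (i,a) \in nbhd (Gb_rel k d b) (inl (i,a')) :&: Hs k d b.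
    rewrite in_setI /nbhd !inE /Gb_rel /join_rel /copies_rel /complete_rel /=.
    by rewrite eqxx ha'.
  rewrite h3 add1n in h2; apply: (leq_ltn_trans h1); rewrite [X in _ < X]h2; exact: ltnSn.
have := @leq_bigmax_cond _ (fun S => is_minimal_kTDS k (Gb_rel k d b) S) (fun S : {set Gb_vert k d b} => #|S|) _ hmin.
rewrite card_Hs card_V => h. apply: leq_trans h; lia.
Qed.
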